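(* For every integer $d>2$, $\gamma_{gr}^{L,d-1}(Q_d)=2^d-1$ and $\gamma_{gr}^{L,d-2}(Q_d)=2^d-2$.
   Context: $Q_d$ is the $d$-dimensional hypercube: vertices are the $0$-$1$ strings of length $d$, adjacent iff they differ in exactly one position. For a vertex $v$, $N(v)$ is its open neighborhood and $N[v]=N(v)\cup\{v\}$. A sequence $S=(v_1,\ldots,v_m)$ of distinct vertices is a $k$-$L$-sequence if for each $i$ there is $u_i\in N[v_i]$ such that the number of indices $j<i$ with $u_i\in N(v_j)$ is less than $k$. $\gamma_{gr}^{L,k}(G)$ is the maximum length of a $k$-$L$-sequence of $G$. *)

(* Defs.v *)
From mathcomp Require Import all_boot.
Set Implicit Arguments. Unset Strict Implicit. Unset Printing Implicit Defensive.

Definition Qvert (d : nat) := {ffun 'I_d -> bool}.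

Definition qadj (d : nat) (u v : Qvert d) : bool := #|[set i | u i != v i]| == 1.

Definition qcadj (d : nat) (u v : Qvert d) : bool := (u == v) || qadj u v.

Definition is_kL_seq (d k : nat) (S : seq (Qvert d)) : bool :=
  uniq S &&
  [forall i : 'I_(size S),
     [exists u : Qvert d,
        qcadj u (nth u S i) &&
        (#|[set j : 'I_(size S) | (j < i) && qadj u (nth u S j)]| < k)]].

(* maximum length of a k-L-sequence (lengths are bounded by #|Q_d| by distinctness) *)
Definition gamma_grLk (d k : nat) : nat :=
  \max_(n < #|{: Qvert d}|.+1 | [exists t : n.-tuple (Qvert d), is_kL_seq k (val t)]) n.

(* Main.v *)
Require Import Defs.
From mathcomp Require Import all_boot.
From mathcomp Require Import zify.
Set Implicit Arguments. Unset Strict Implicit. Unset Printing Implicit Defensive.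

Section Basic.
Variable d : nat.
Local Notation V := (Qvert d).

Definition flip (u : V) (t : 'I_d) : V := [ffun j => if j == t then ~~ u t else u j].
Definition top : V := [ffun _ => true].
Definition wt (x : V) := #|[set j | x j]|.

Lemma flipK (u : V) (t : 'I_d) : flip (flip u t) t = u.
Proof. apply/ffunP => j; rewrite !ffunE; case: eqP => [->|]; by rewrite ?eqxx ?negbK. Qed.

Lemma flip_inj (u : V) : injective (flip u).
Proof.
move=> t t' /ffunP /(_ t); rewrite !ffunE eqxx; case: eqP => // _.
by case: (u t).
Qed.

Lemma flipC (u : V) (p r : 'I_d) : flip (flip u p) r = flip (flip u r) p.
Proof.
apply/ffunP => j; rewrite !ffunE.
case: (eqVneq p r) => [->|npr]; first by [].
case: (eqVneq j r) => [->|hr] //.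
by rewrite eq_sym (negPf npr).
Qed.

Lemma adj_flip (u : V) t : qadj u (flip u t).
Proof.
rewrite /qadj; have -> : [set i | u i != flip u t i] = [set t].
  apply/setP => j; rewrite !inE ffunE; case: (eqVneq j t) => [->|h]; by [case: (u t)|rewrite eqxx].
by rewrite cards1.
Qed.

Lemma adjP (u y : V) : qadj u y -> exists t, y = flip u t.
Proof.
rewrite /qadj => /cards1P [t ht]; exists t; apply/ffunP => j.
rewrite ffunE; move/setP: ht => /(_ j); rewrite !inE.
case: (eqVneq j t) => [->|h]; rewrite ?(negPf h); [by case: (u t); case: (y t) | by case: (u j); case: (y j)].
Qed.

Lemma card_nbr (u : V) : #|[set y : V | qadj u y]| = d.
Proof.
have -> : [set y : V | qadj u y] = flip u @: setT.
  apply/setP => y; rewrite inE; apply/idP/imsetP.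
  - by move/adjP => [t ->]; exists t.
  - by move=> [t _ ->]; apply: adj_flip.
by rewrite card_imset ?cardsT ?card_ord //; apply: flip_inj.
Qed.

Lemma wt_le (x : V) : wt x <= d.
Proof. by rewrite /wt -[X in _ <= X]card_ord max_card. Qed.

Lemma wt_up (x : V) (t : 'I_d) : ~~ x t -> wt (flip x t) = (wt x).+1.
Proof.
move=> ht; rewrite /wt.
have -> : [set j | flip x t j] = t |: [set j | x j].
  apply/setP => j; rewrite !inE ffunE; case: (eqVneq j t) => [->|h]; by rewrite ?ht ?(negPf h).
by rewrite cardsU1 inE (negPf ht).
Qed.

Lemma wt_down (x : V) (t : 'I_d) : x t -> wt (flip x t) = (wt x).-1.
Proof.
move=> ht; rewrite /wt (cardsD1 t [set j | x j]) inE ht add1n succnK.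
apply: eq_card => j; rewrite !inE ffunE; case: (eqVneq j t) => [->|h]; by rewrite ?ht ?(negPf h).
Qed.

Lemma wt_top (x : V) : wt x = d -> x = top.
Proof.
move=> h; have H0 := cardsC [set j | x j]; rewrite card_ord -/(wt x) h in H0.
have /cards0_eq /setP H : #|~: [set j | x j]| = 0 by lia.
apply/ffunP => j; move: (H j); rewrite !inE ffunE; by case: (x j).
Qed.

Lemma wt_topE : wt top = d.
Proof.
rewrite /wt; have -> : [set j | top j] = setT by apply/setP => j; rewrite !inE ffunE.
by rewrite cardsT card_ord.
Qed.

Lemma wt_d1 (x : V) : 0 < d -> wt x = d.-1 -> exists q, x = flip top q.
Proof.
move=> d0 h; case: (pickP (fun q => ~~ x q)) => [q hq' | H]; last first.
  have ex : x = top by apply/ffunP => j; move: (H j); rewrite ffunE /=; case: (x j).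
  by move: h; rewrite ex wt_topE; lia.
exists q; rewrite -[x](flipK x q); congr flip; apply: wt_top; rewrite wt_up //; lia.
Qed.

Lemma wt_d2 (x : V) (r : 'I_d) : 1 < d -> wt x = d.-2 -> ~~ x r -> exists p, p != r /\ x = flip (flip top r) p.
Proof.
move=> d1 h hr; have := wt_up hr; rewrite h => h'.
have [p hp] : exists p, flip x r = flip top p by apply: wt_d1; lia.
exists p; split.
  apply/eqP => epr; move/ffunP: hp => /(_ r); rewrite !ffunE !eqxx epr eqxx /=.
  by rewrite hr.
by rewrite -[x](flipK x r) hp flipC.
Qed.

End Basic.

Lemma pos_card (T : finType) (S : seq T) (x0 : T) (i : nat) (P : pred T) : uniq S ->
 #|[set j : 'I_(size S) | (j < i) && P (nth x0 S j)]| = #|[set y | (y \in take i S) && P y]|.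
Proof.
move=> uS.
rewrite -(card_in_imset (f := fun j : 'I_(size S) => nth x0 S j)); last first.
  move=> j k _ _ /eqP; rewrite nth_uniq // => /eqP; apply: val_inj.
apply: eq_card => y; rewrite inE; apply/imsetP/andP.
- case=> j; rewrite inE => /andP [ji Pj] ->; split=> //.
  by rewrite in_take ?mem_nth // index_uniq.
- case=> yt Py; have yS := mem_take yt.
  have := in_take i yS; rewrite yt => /esym ii.
  have yi : index y S < size S by rewrite index_mem.
  exists (Ordinal yi); last by rewrite nth_index.
  by rewrite inE /= ii nth_index.
Qed.


Definition seqK d (K : {set Qvert d}) (ka : Qvert d -> nat) :=
  sort (fun x y : Qvert d => ka x <= ka y) (enum K).

Lemma seqK_size d (K : {set Qvert d}) ka : size (seqK K ka) = #|K|.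
Proof. by rewrite size_sort -cardE. Qed.

Lemma sort_kL d k (K : {set Qvert d}) (ka : Qvert d -> nat) :
  (forall x, x \in K -> exists u, qcadj u x &&
     (#|[set t | (flip u t != x) && (flip u t \in K) && (ka (flip u t) <= ka x)]| < k)) ->
  is_kL_seq k (seqK K ka).
Proof.
move=> H; set S := seqK K ka.
have uS : uniq S by rewrite sort_uniq enum_uniq.
have memS : forall y, (y \in S) = (y \in K) by move=> y; rewrite mem_sort mem_enum.
have sS : sorted (fun x y : Qvert d => ka x <= ka y) S.
  by apply: sort_sorted => a b; apply: leq_total.
rewrite /is_kL_seq uS /=; apply/forallP => i.
set x := nth (top d) S i.
have xK : x \in K by rewrite -memS mem_nth.
have [u /andP [hu hc]] := H x xK.
apply/existsP; exists u.
have -> : [set j : 'I_(size S) | (j < i) && qadj u (nth u S j)] =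
          [set j : 'I_(size S) | (j < i) && qadj u (nth (top d) S j)].
  by apply/setP => j; rewrite !inE (set_nth_default (top d) u (ltn_ord j)).
rewrite pos_card // (set_nth_default (top d) u (ltn_ord i)) -/x hu /=.
apply: leq_ltn_trans hc.
apply: leq_trans (leq_imset_card (flip u) _); apply: subset_leq_card.
apply/subsetP => y; rewrite inE => /andP [yt /adjP [t ey]].
apply/imsetP; exists t => //; rewrite inE -ey.
have yS := mem_take yt.
have := in_take i yS; rewrite yt => /esym ii.
apply/andP; split; first (apply/andP; split).
- apply/eqP => exy; move: ii; rewrite exy /x index_uniq //; lia.
- by rewrite -memS.
- have yi : index y S < size S by rewrite index_mem.
  rewrite -{1}(nth_index (top d) yS) /x.
  apply: (sorted_leq_nth _ _ (top d) sS); rewrite ?inE ?ltn_ord //; try lia.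
  + by move=> a b c; apply: leq_trans.
Qed.

Lemma card_V d : #|{: Qvert d}| = 2 ^ d.
Proof. by rewrite card_ffun card_bool card_ord. Qed.

Lemma upper d k (S : seq (Qvert d)) : is_kL_seq k S -> 0 < size S -> d + size S <= k + 2 ^ d.
Proof.
case/andP => uS /forallP H0 sz.
have hi : (size S).-1 < size S by lia.
have /existsP [u /andP [hu hc]] := H0 (Ordinal hi).
rewrite /= (set_nth_default (top d) u hi) in hu.
set x := nth (top d) S (size S).-1 in hu.
have e : [set j : 'I_(size S) | (j < Ordinal hi) && qadj u (nth u S j)] =
         [set j : 'I_(size S) | (j < (size S).-1) && qadj u (nth (top d) S j)].
  by apply/setP => j; rewrite !inE (set_nth_default (top d) u (ltn_ord j)).
rewrite e pos_card // in hc.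
set A := [set y | (y \in take (size S).-1 S) && qadj u y] in hc.
set B := ~: [set y | y \in S].
have cB : #|[set y | y \in S]| + #|B| = 2 ^ d by rewrite cardsC card_V.
have cS : #|[set y | y \in S]| = size S by rewrite cardsE; apply/card_uniqP.
have sub : [set y | qadj u y] \subset A :|: B :|: [set x].
  apply/subsetP => y; rewrite inE => uy; rewrite !inE.
  case: (boolP (y \in S)) => yS; last by rewrite orbT.
  have : (y \in take (size S).-1 S) || (y == x).
    move: yS; rewrite -{1}(cat_take_drop (size S).-1 S) mem_cat (drop_nth (top d) hi).
    by rewrite prednK // drop_size inE.
  by case/orP => [->|->]; rewrite ?uy ?orbT.
have := subset_leq_card sub; rewrite card_nbr.
have := (leq_card_setU (A :|: B) [set x]).1; have := (leq_card_setU A B).1; rewrite cards1.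
set m := 2 ^ d in cB *; lia.
Qed.

Lemma exists_false d (x : Qvert d) : wt x < d -> exists r, ~~ x r.
Proof.
move=> h; case: (pickP (fun q => ~~ x q)) => [q hq | H]; first by exists q.
have ex : x = top d by apply/ffunP => j; move: (H j); rewrite ffunE /=; case: (x j).
by move: h; rewrite ex wt_topE; lia.
Qed.

Lemma cardC_le d (T A : {set 'I_d}) m : T \subset ~: A -> m <= #|A| -> #|T| <= d - m.
Proof.
move=> sT hA; have := subset_leq_card sT; have := cardsC A; rewrite card_ord; lia.
Qed.

Section L1.
Variables (d : nat) (a : 'I_d).
Hypothesis d1 : 1 < d.
Local Notation V := (Qvert d).

Definition K1 : {set V} := setT :\ flip (top d) a.
Definition ka1 (x : V) := if wt x <= d - 2 then wt x else if wt x == d then d - 1 else d.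

Lemma ka1_low x : wt x <= d - 2 -> ka1 x = wt x.
Proof. by rewrite /ka1 => ->. Qed.
Lemma ka1_top x : wt x = d -> ka1 x = d - 1.
Proof. move=> h; rewrite /ka1 h eqxx; case: ifP => //; lia. Qed.
Lemma ka1_mid x : wt x = d - 1 -> ka1 x = d.
Proof. move=> h; rewrite /ka1 h; case: ifP; first lia. by case: eqP => //; lia. Qed.

Lemma lower1 : exists S : seq V, is_kL_seq (d - 1) S /\ size S = 2 ^ d - 1.
Proof.
exists (seqK K1 ka1); split; last first.
  rewrite seqK_size /K1; have := cardsD1 (flip (top d) a) [set: V]; rewrite inE cardsT card_V => ->; by rewrite /= add1n subn1.
apply: sort_kL => x; rewrite !inE andbT => xK.
have := wt_le x => hle.
case: (leqP (wt x) (d - 2)) => hw.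
- exists x; rewrite /qcadj eqxx /=.
  apply: (@leq_ltn_trans (wt x)); last lia.
  apply: subset_leq_card; apply/subsetP => t; rewrite !inE => /andP [_ hk].
  case xt: (x t) => //; move: hk.
  rewrite (ka1_low hw); have hu : wt (flip x t) = (wt x).+1 by rewrite wt_up ?xt.
  case: (leqP (wt (flip x t)) (d - 2)) => h2; first by rewrite (ka1_low h2); lia.
  rewrite (@ka1_mid (flip x t)); lia.
case: (eqVneq (wt x) d) => hd.
- exists x; rewrite /qcadj eqxx /=.
  have ex := wt_top hd.
  rewrite (_ : [set t | _] = set0) ?cards0; first lia.
  apply/setP => t; rewrite !inE; apply/negbTE; apply/negP => /andP [_ hk].
  have ht : wt (top d) = d by apply: wt_topE.
  have hf : wt (flip (top d) t) = d - 1 by rewrite wt_down ?ffunE // ht; lia.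
  move: hk; rewrite ex (ka1_top ht) (ka1_mid hf); lia.
- have [q ex] : exists q, x = flip (top d) q by apply: wt_d1; lia.
  exists (top d); rewrite /qcadj ex adj_flip orbT /=.
  have qa : q != a by apply/eqP => eqa; move: xK; rewrite ex eqa eqxx.
  apply: (@leq_ltn_trans (d - 2)); last lia.
  apply: (@cardC_le _ _ [set q; a]); last by rewrite cards2 qa.
  apply/subsetP => t; rewrite !inE => /andP [/andP [h1 h2] _].
  apply/negP => /orP [/eqP et | /eqP et]; move: h1 h2; by rewrite et ?eqxx.
Qed.

End L1.

Section L2.
Variables (d : nat) (a b : 'I_d).
Hypothesis ab : a != b.
Hypothesis d2 : 2 < d.
Local Notation V := (Qvert d).

Definition ys : V := flip (flip (top d) a) b.
Definition K2 : {set V} := setT :\ top d :\ ys.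
Definition ka2 (x : V) :=
  if wt x <= d - 3 then wt x else if wt x == d - 1 then d - 2
  else if wt x == d - 2 then (if x a then d - 1 else d) else d + 1.

Lemma ka2_low x : wt x <= d - 3 -> ka2 x = wt x.
Proof. by rewrite /ka2 => ->. Qed.
Lemma ka2_z x : wt x = d - 1 -> ka2 x = d - 2.
Proof. move=> h; rewrite /ka2 h eqxx; case: ifP => //; lia. Qed.
Lemma ka2_p x : wt x = d - 2 -> ka2 x = if x a then d - 1 else d.
Proof.
move=> h; rewrite /ka2 h eqxx; case: ifP; first lia.
by case: eqP => //; lia.
Qed.

Lemma ys_top : ys != top d.
Proof. apply/eqP => /ffunP /(_ a); by rewrite !ffunE eqxx (negPf ab). Qed.

Lemma lower2 : exists S : seq V, is_kL_seq (d - 2) S /\ size S = 2 ^ d - 2.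
Proof.
have ht : wt (top d) = d by apply: wt_topE.
exists (seqK K2 ka2); split; last first.
  rewrite seqK_size /K2; have := cardsD1 ys ([set: V] :\ top d).
  have := cardsD1 (top d) [set: V]; rewrite !inE ys_top cardsT card_V /=.
  by move=> -> ->; rewrite !add1n subn2.
apply: sort_kL => x; rewrite !inE andbT => /andP [xys xtop].
have := wt_le x => hle.
case: (leqP (wt x) (d - 3)) => hw.
- exists x; rewrite /qcadj eqxx /=.
  apply: (@leq_ltn_trans (wt x)); last lia.
  apply: subset_leq_card; apply/subsetP => t; rewrite !inE => /andP [_ hk].
  case xt: (x t) => //; move: hk.
  rewrite (ka2_low hw); have hu : wt (flip x t) = (wt x).+1 by rewrite wt_up ?xt.
  case: (leqP (wt (flip x t)) (d - 3)) => h2; first by rewrite (ka2_low h2); lia.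
  rewrite (@ka2_p (flip x t)); last lia.
  case: ifP => _; lia.
case: (eqVneq (wt x) d) => hd.
  by move: xtop; rewrite (wt_top hd) eqxx.
case: (eqVneq (wt x) (d - 1)) => hd1.
- exists x; rewrite /qcadj eqxx /=.
  rewrite (_ : [set t | _] = set0) ?cards0; first lia.
  apply/setP => t; rewrite !inE; apply/negbTE; apply/negP => /andP [/andP [_ hK] hk].
  case xt: (x t).
  + have hf : wt (flip x t) = d - 2 by rewrite wt_down ?xt // hd1; lia.
    move: hk; rewrite (ka2_z hd1) (ka2_p hf); case: ifP => _; lia.
  + have hf : wt (flip x t) = d by rewrite wt_up ?xt // hd1; lia.
    by move: hK; rewrite (wt_top hf) eqxx andbF.
have hd2 : wt x = d - 2 by lia.
have [r [hr hra]] : exists r, ~~ x r /\ (~~ x a -> r = a).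
  case xa: (x a); last by exists a; rewrite xa.
  have [r hr] : exists r, ~~ x r by apply: exists_false; lia.
  by exists r.
have [p [pr ex]] : exists p, p != r /\ x = flip (flip (top d) r) p.
  by apply: wt_d2 => //; lia.
set u := flip (top d) r in ex.
have hwu : wt u = d - 1 by rewrite /u wt_down ?ffunE // ht; lia.
exists u; rewrite /qcadj ex adj_flip orbT /=.
set c := if x a then a else b.
have xp : x p = false by rewrite ex !ffunE eqxx (negPf pr).
have cp : c != p.
  rewrite /c; case xa: (x a); first by apply/eqP => e; move: xa; rewrite e xp.
  have ra := hra (negbT xa).
  by apply/eqP => e; move: xys; rewrite ex /u ra -e /ys eqxx.
have cr : c != r.
  rewrite /c; case xa: (x a); first by apply/eqP => e; move: hr; rewrite -e xa.
  by rewrite (hra (negbT xa)) eq_sym.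
apply: (@leq_ltn_trans (d - 3)); last lia.
apply: (@cardC_le _ _ [set p; r; c]); last first.
  have pc : (p == c) = false by rewrite eq_sym; apply/negbTE.
  have rc : (r == c) = false by rewrite eq_sym; apply/negbTE.
  by rewrite -setUA cardsU1 cards2 !inE (negPf pr) pc rc.
apply/subsetP => t; rewrite !inE => /andP [/andP [h1 h2] hk].
apply/negP => /orP [/orP [/eqP et | /eqP et] | /eqP et].
- by move: h1; rewrite et eqxx.
- by move: h2; rewrite et /u flipK eqxx andbF.
- move: et; rewrite /c; case xa: (x a) => et.
  + have ar : a != r by apply/eqP => e; move: hr; rewrite -e xa.
    have ua : u a by rewrite /u !ffunE (negPf ar).
    have hf : wt (flip u t) = d - 2 by rewrite et (wt_down ua) hwu; clear -d2; lia.
    move: hk; rewrite -ex (ka2_p hf) (ka2_p hd2) xa et ffunE eqxx ua /=; clear -d2; lia.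
  + by move: h2; rewrite et /u (hra (negbT xa)) -/ys eqxx.
Qed.

End L2.

Lemma gamma_eq d k m (S : seq (Qvert d)) : @is_kL_seq d k S -> size S = m ->
  (forall S' : seq (Qvert d), @is_kL_seq d k S' -> size S' <= m) -> gamma_grLk d k = m.
Proof.
move=> hS hm H; apply/eqP; rewrite eqn_leq; apply/andP; split.
- apply/bigmax_leqP => n /existsP [t ht].
  by rewrite -(size_tuple t); apply: H.
- subst m; have hm : size S < #|{: Qvert d}|.+1.
    case/andP: hS => /card_uniqP <- _; rewrite ltnS; apply: max_card.
  apply: leq_trans (leq_bigmax_cond (Ordinal hm) _) => //=.
  by apply/existsP; exists (in_tuple S).
Qed.

Theorem mainTheorem11 (d : nat) (hd : 2 < d) :
  gamma_grLk d (d - 1) = 2 ^ d - 1 /\ gamma_grLk d (d - 2) = 2 ^ d - 2.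
Proof.
have h0 : 0 < d by lia.
have h1 : 1 < d by lia.
set a : 'I_d := Ordinal h0; set b : 'I_d := Ordinal h1.
have ab : a != b by [].
split.
- have [S [hS sz]] := @lower1 d a h1.
  apply: (gamma_eq hS sz) => S' hS'.
  case: (posnP (size S')) => [-> //|hp].
  have := upper hS' hp; set m := 2 ^ d; lia.
- have [S [hS sz]] := @lower2 d a b ab hd.
  apply: (gamma_eq hS sz) => S' hS'.
  case: (posnP (size S')) => [-> //|hp].
  have := upper hS' hp; set m := 2 ^ d; lia.
Qed.
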